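(* Let $k\geq 2$ and $\Lambda_{\rm cr}(k)=\frac{k^k}{(k-1)^{k+1}}$. Consider the HC model with countable set of spin values $\mathbb Z$ on the Cayley tree $\Gamma^k$, associated with the graph $G$ on $\mathbb Z$ in which every vertex is adjacent to $0$ and no two vertices of $\mathbb Z_0=\mathbb Z\setminus\{0\}$ are adjacent, with activities $\lambda_j>0$. Then: (1) If the series $\sum_{j\in\mathbb Z_0}\lambda_j$ converges, with sum $\Lambda$, then for $0<\Lambda\leq\Lambda_{\rm cr}$ there exists a unique $G_k^{(2)}$-periodic Gibbs measure $\mu_0$, and it is translation-invariant; and for $\Lambda>\Lambda_{\rm cr}$ there are exactly three $G_k^{(2)}$-periodic Gibbs measures $\mu_0,\mu_1,\mu_2$, where $\mu_0$ is translation-invariant and $\mu_1,\mu_2$ are not translation-invariant. (2) If the series $\sum_{j\in\mathbb Z_0}\lambda_j$ diverges, there is no $G_k^{(2)}$-periodic Gibbs measure.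
   Context: The Cayley tree $\Gamma^k$ of order $k$ is the infinite tree in which every vertex has exactly $k+1$ neighbours; $V$ is its vertex set, identified with the group $G_k$, the free product of $k+1$ cyclic groups of order two; $G_k^{(2)}$ is the subgroup of words of even length. Fix a root $x^0$ (the identity); $|x|$ is the distance from $x^0$ and $S(x)$ the set of direct successors of $x$. A configuration $\sigma:V\to\mathbb Z$ is admissible if $\sigma(x)\sigma(y)=0$ for all nearest neighbours $x,y$. The HC Hamiltonian is $H(\sigma)=J\sum_{x\in V}\ln\lambda_{\sigma(x)}$ for admissible $\sigma$ and $+\infty$ otherwise. Gibbs measures of this model correspond one-to-one to normalisable boundary laws, which (normalised at spin $0$) are families $z_x=(z_{i,x})_{i\in\mathbb Z_0}$ of positive numbers satisfying $z_{i,x}=\lambda_i\prod_{y\in S(x)}\bigl(1+\sum_{j\in\mathbb Z_0}z_{j,y}\bigr)^{-1}$, $i\in\mathbb Z_0$. A measure is $G_k^{(2)}$-periodic if it corresponds to a solution with $z_x=z$ for $|x|$ even and $z_x=\tilde z$ for $|x|$ odd, i.e. to positive sequences $z,\tilde z$ indexed by $\mathbb Z_0$ satisfying $$z_i=\lambda_i\Bigl(1+\sum_{j\in\mathbb Z_0}\tilde z_j\Bigr)^{-k},\qquad \tilde z_i=\lambda_i\Bigl(1+\sum_{j\in\mathbb Z_0}z_j\Bigr)^{-k},\qquad i\in\mathbb Z_0,$$ and it is normalisable if $\sum_i z_i^{(k+1)/k}<\infty$ and $\sum_i\tilde z_i^{(k+1)/k}<\infty$. Translation-invariant measures correspond to solutions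 with $z=\tilde z$. *)

(* Defs.v *)
From Stdlib Require Import Reals ZArith Lra.
From Coquelicot Require Import Coquelicot.
Open Scope R_scope.

(* Sum over Z_0 = Z \ {0} of a family f : Z -> R (the value f 0 is ignored).
   For nonnegative families, this symmetric enumeration gives the
   (unconditional) sum. *)
Definition Z0_term (f : Z -> R) (n : nat) : R :=
  f (Z.of_nat (S n)) + f (- Z.of_nat (S n))%Z.

Definition has_sum_Z0 (f : Z -> R) (s : R) : Prop := is_series (Z0_term f) s.
Definition summable_Z0 (f : Z -> R) : Prop := ex_series (Z0_term f).

Definition Lambda_cr (k : nat) : R := (INR k) ^ k / (INR k - 1) ^ (S k).

(* A G_k^(2)-periodic normalisable boundary law (z, zt), sequences indexed by
   Z_0 (values at 0 irrelevant):
     z_i  = lambda_i (1 + sum_{j in Z_0} zt_j)^(-k),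
     zt_i = lambda_i (1 + sum_{j in Z_0} z_j)^(-k),
   z_i, zt_i > 0, and sum z_i^((k+1)/k), sum zt_i^((k+1)/k) finite.
   By the one-to-one correspondence, these are the G_k^(2)-periodic Gibbs
   measures of the HC model. *)
Definition periodic_bl (k : nat) (lam : Z -> R) (z zt : Z -> R) : Prop :=
  (forall i, i <> 0%Z -> 0 < z i /\ 0 < zt i) /\
  exists s st : R,
    has_sum_Z0 z s /\ has_sum_Z0 zt st /\
    (forall i, i <> 0%Z -> z i = lam i / (1 + st) ^ k) /\
    (forall i, i <> 0%Z -> zt i = lam i / (1 + s) ^ k) /\
    summable_Z0 (fun i => Rpower (z i) (INR (S k) / INR k)) /\
    summable_Z0 (fun i => Rpower (zt i) (INR (S k) / INR k)).

Definition eqZ0 (f g : Z -> R) : Prop := forall i, i <> 0%Z -> f i = g i.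

(* Two boundary laws give the same measure *)
Definition same_bl (z1 zt1 z2 zt2 : Z -> R) : Prop := eqZ0 z1 z2 /\ eqZ0 zt1 zt2.

Definition transl_inv (z zt : Z -> R) : Prop := eqZ0 z zt.

(* Main.v *)
Require Import Defs.
From Stdlib Require Import Reals ZArith Lra Lia.
From Coquelicot Require Import Coquelicot.
Open Scope R_scope.

Definition sh (u : R) := (exp u - exp (- u)) / 2.
Definition ch (u : R) := (exp u + exp (- u)) / 2.

Lemma exp_neg u : exp (- u) = / exp u.
Proof. rewrite exp_Ropp; reflexivity. Qed.

Lemma sh_plus a b : sh (a + b) = sh a * ch b + ch a * sh b.
Proof.
  unfold sh, ch. rewrite Ropp_plus_distr, !exp_plus, !exp_neg.
  assert (exp a > 0) by apply exp_pos. assert (exp b > 0) by apply exp_pos.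
  field; lra.
Qed.

Lemma ch_plus a b : ch (a + b) = ch a * ch b + sh a * sh b.
Proof.
  unfold sh, ch. rewrite Ropp_plus_distr, !exp_plus, !exp_neg.
  assert (exp a > 0) by apply exp_pos. assert (exp b > 0) by apply exp_pos.
  field; lra.
Qed.

Lemma sh_minus a b : sh (a - b) = sh a * ch b - ch a * sh b.
Proof.
  unfold sh, ch. unfold Rminus. rewrite Ropp_plus_distr, Ropp_involutive, !exp_plus, !exp_neg.
  assert (exp a > 0) by apply exp_pos. assert (exp b > 0) by apply exp_pos.
  field; lra.
Qed.

Lemma ch_sh2 u : ch u * ch u - sh u * sh u = 1.
Proof.
  unfold sh, ch. rewrite exp_neg. assert (exp u > 0) by apply exp_pos. field; lra.
Qed.

Lemma sh_pos u : 0 < u -> 0 < sh u.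
Proof.
  intro H. unfold sh. assert (exp (-u) < exp u) by (apply exp_increasing; lra). lra.
Qed.

Lemma sh_0 : sh 0 = 0.
Proof. unfold sh. rewrite Ropp_0. lra. Qed.

Lemma ch_ge1 u : 1 <= ch u.
Proof.
  unfold ch. rewrite exp_neg. assert (exp u > 0) by apply exp_pos.
  set (w := exp u) in *.
  assert (w + / w - 2 = (w - 1) * (w - 1) / w) by (field; lra).
  assert (0 <= (w - 1) * (w - 1) / w).
  { apply Rdiv_le_0_compat; [apply Rle_0_sqr | lra]. }
  lra.
Qed.

Lemma ch_gt1 u : 0 < u -> 1 < ch u.
Proof.
  intro Hu. unfold ch. rewrite exp_neg. assert (exp u > 1).
  { rewrite <- exp_0. apply exp_increasing; lra. }
  set (w := exp u) in *.
  assert (w + / w - 2 = (w - 1) * (w - 1) / w) by (field; lra).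
  assert (0 < (w - 1) * (w - 1) / w).
  { apply Rdiv_lt_0_compat; [apply Rmult_lt_0_compat; lra | lra]. }
  lra.
Qed.

Lemma ch_pos u : 0 < ch u.
Proof. generalize (ch_ge1 u); lra. Qed.

Lemma sh_nonneg u : 0 <= u -> 0 <= sh u.
Proof. intro H. destruct (Req_dec u 0) as [->|]. rewrite sh_0; lra. left; apply sh_pos; lra. Qed.

Lemma sh_mul_ge (m : nat) t : 0 <= t -> INR m * sh t <= sh (INR m * t).
Proof.
  intro Ht. induction m.
  - simpl. rewrite !Rmult_0_l, sh_0. lra.
  - rewrite S_INR. replace ((INR m + 1) * t) with (INR m * t + t) by ring.
    rewrite sh_plus.
    assert (0 <= INR m * t) by (apply Rmult_le_pos; [apply pos_INR|lra]).
    generalize (sh_nonneg _ H) (sh_nonneg _ Ht) (ch_ge1 t) (ch_ge1 (INR m * t)). nra.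
Qed.

Lemma exp_nat n t : exp (INR n * t) = exp t ^ n.
Proof.
  induction n. simpl. rewrite Rmult_0_l, exp_0; reflexivity.
  rewrite S_INR. replace ((INR n + 1) * t) with (INR n * t + t) by ring.
  rewrite exp_plus, IHn. simpl. ring.
Qed.

Lemma is_derive_sh u : is_derive sh u (ch u).
Proof. unfold sh, ch. auto_derive; auto. lra. Qed.
Lemma is_derive_ch u : is_derive ch u (sh u).
Proof. unfold sh, ch. auto_derive; auto. lra. Qed.

Lemma sh_ge_id u : 0 <= u -> u <= sh u.
Proof.
  intro Hu. destruct (Req_dec u 0) as [->|Hn]. rewrite sh_0; lra.
  destruct (MVT_cor2 (fun x => sh x - x) (fun x => ch x - 1) 0 u) as [c [Hc1 Hc2]]; [lra| |].
  { intros c _. apply is_derive_Reals. unfold sh, ch. auto_derive; auto. lra. }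
  rewrite sh_0 in Hc1. generalize (ch_ge1 c). nra.
Qed.

Lemma sh_le u : 0 <= u -> sh u <= u * ch u.
Proof.
  intro Hu. destruct (Req_dec u 0) as [->|Hn]. rewrite sh_0; lra.
  destruct (MVT_cor2 (fun x => x * ch x - sh x) (fun x => x * sh x) 0 u) as [c [Hc1 Hc2]]; [lra| |].
  { intros c _. apply is_derive_Reals. unfold sh, ch. auto_derive; auto. lra. }
  rewrite sh_0 in Hc1. assert (0 <= c * sh c * (u - 0)).
  { apply Rmult_le_pos; [apply Rmult_le_pos; [lra|apply sh_nonneg; lra]|lra]. }
  lra.
Qed.

Definition Lam (k : nat) (t : R) := sh t * sh (INR k * t) ^ k / sh ((INR k - 1) * t) ^ (S k).
Definition Lf (k : nat) (t : R) := ln (sh t) + INR k * ln (sh (INR k * t)) - (INR k + 1) * ln (sh ((INR k - 1) * t)).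
Definition Dl (k : nat) (t : R) := ch t / sh t + INR k * INR k * ch (INR k * t) / sh (INR k * t)
   - (INR k + 1) * (INR k - 1) * ch ((INR k - 1) * t) / sh ((INR k - 1) * t).

Lemma K_ge2 k : (2 <= k)%nat -> 2 <= INR k.
Proof. intro H. apply le_INR in H. simpl in H. lra. Qed.

Lemma Dl_pos k t : (2 <= k)%nat -> 0 < t -> 0 < Dl k t.
Proof.
  intros Hk Ht. generalize (K_ge2 k Hk); intro HK.
  set (K := INR k) in *.
  assert (H1 : 0 < (K - 1) * t) by (apply Rmult_lt_0_compat; lra).
  set (s1 := sh t). set (c1 := ch t). set (s := sh ((K-1)*t)). set (c := ch ((K-1)*t)).
  assert (Hs1 : 0 < s1) by (apply sh_pos; lra).
  assert (Hs : 0 < s) by (apply sh_pos; lra).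
  assert (Hc : 1 < c) by (apply ch_gt1; lra).
  assert (HS : sh (K * t) = s * c1 + c * s1).
  { replace (K * t) with ((K-1)*t + t) by ring. apply sh_plus. }
  assert (HC : ch (K * t) = c * c1 + s * s1).
  { replace (K * t) with ((K-1)*t + t) by ring. apply ch_plus. }
  assert (HA : sh ((K - 2) * t) = s * c1 - c * s1).
  { replace ((K - 2) * t) with ((K-1)*t - t) by ring. apply sh_minus. }
  assert (HA2 : (K - 2) * s1 <= sh ((K - 2) * t)).
  { replace (K - 2) with (INR (k - 2)). apply sh_mul_ge; lra.
    rewrite minus_INR by lia. reflexivity. }
  assert (HS2 : K * s1 <= sh (K * t)) by (apply sh_mul_ge; lra).
  assert (Hcs : c * c - s * s = 1) by apply ch_sh2.
  unfold Dl. fold K. fold s1 c1 s c. rewrite HS, HC. rewrite HA in HA2. rewrite HS in HS2.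
  set (S := s * c1 + c * s1) in *.
  assert (HSp : 0 < S) by nra.
  assert (E1 : c1 / s1 - c / s = (s * c1 - c * s1) / (s1 * s)) by (field; lra).
  assert (E2 : (c * c1 + s * s1) / S - c / s = - s1 / (S * s)).
  { assert (N : (c * c1 + s * s1) * s - c * S = - s1).
    { replace ((c * c1 + s * s1) * s - c * S) with (- s1 * (c * c - s * s)) by (unfold S; ring).
      rewrite Hcs; ring. }
    rewrite <- N. field; lra. }
  assert (I1 : (K - 2) / s <= (s * c1 - c * s1) / (s1 * s)).
  { apply (Rmult_le_reg_r (s1 * s)). nra.
    replace ((K - 2) / s * (s1 * s)) with ((K-2) * s1) by (field; lra).
    replace ((s * c1 - c * s1) / (s1 * s) * (s1 * s)) with (s * c1 - c * s1) by (field; lra). lra. }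
  assert (I2 : K * K * (s1 / (S * s)) <= K / s).
  { apply (Rmult_le_reg_r (S * s)). nra.
    replace (K * K * (s1 / (S * s)) * (S * s)) with (K * (K * s1)) by (field; lra).
    replace (K / s * (S * s)) with (K * S) by (field; lra). nra. }
  assert (I3 : 0 < 2 * (c - 1) / s) by (apply Rdiv_lt_0_compat; lra).
  assert (EQ : c1 / s1 + K * K * (c * c1 + s * s1) / S - (K + 1) * (K - 1) * c / s
     = (c1 / s1 - c / s) + K * K * ((c * c1 + s * s1) / S - c / s) + 2 * c / s) by (field; lra).
  rewrite EQ, E1, E2.
  replace (K * K * (- s1 / (S * s))) with (- (K * K * (s1 / (S * s)))) by (field; lra).
  assert (2 * c / s = 2 * (c - 1) / s + 2 / s) by (field; lra).
  assert (K / s = (K - 2) / s + 2 / s) by (field; lra).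
  lra.
Qed.

Lemma Lf_derive k t : (2 <= k)%nat -> 0 < t -> is_derive (Lf k) t (Dl k t).
Proof.
  intros Hk Ht. generalize (K_ge2 k Hk); intro HK.
  assert (P1 : 0 < sh t) by (apply sh_pos; lra).
  assert (P2 : 0 < sh (INR k * t)) by (apply sh_pos; apply Rmult_lt_0_compat; lra).
  assert (P3 : 0 < sh ((INR k - 1) * t)) by (apply sh_pos; apply Rmult_lt_0_compat; lra).
  unfold Lf, Dl. unfold sh, ch in *.
  auto_derive.
  - repeat split; lra.
  - field. lra.
Qed.

Lemma Lf_strict k t1 t2 : (2 <= k)%nat -> 0 < t1 -> t1 < t2 -> Lf k t1 < Lf k t2.
Proof.
  intros Hk H1 H2.
  destruct (MVT_cor2 (Lf k) (Dl k) t1 t2) as [c [Hc1 Hc2]]; [lra| |].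
  { intros c Hc. apply is_derive_Reals. apply Lf_derive; [assumption|lra]. }
  assert (0 < Dl k c) by (apply Dl_pos; [assumption|lra]).
  assert (0 < Dl k c * (t2 - t1)) by (apply Rmult_lt_0_compat; lra). lra.
Qed.

Lemma exp_Kln k y : 0 < y -> exp (INR k * ln y) = y ^ k.
Proof. intro H. rewrite exp_nat, exp_ln; auto. Qed.

Lemma Lam_exp k t : (2 <= k)%nat -> 0 < t -> Lam k t = exp (Lf k t).
Proof.
  intros Hk Ht. generalize (K_ge2 k Hk); intro HK.
  assert (P1 : 0 < sh t) by (apply sh_pos; lra).
  assert (P2 : 0 < sh (INR k * t)) by (apply sh_pos; apply Rmult_lt_0_compat; lra).
  assert (P3 : 0 < sh ((INR k - 1) * t)) by (apply sh_pos; apply Rmult_lt_0_compat; lra).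
  unfold Lf, Lam. unfold Rminus at 2. rewrite !exp_plus, exp_Ropp, exp_ln by auto.
  replace (INR k + 1) with (INR (S k)) by (rewrite S_INR; ring).
  rewrite !exp_Kln by auto. field. apply pow_nonzero; lra.
Qed.

Lemma Lam_strict k t1 t2 : (2 <= k)%nat -> 0 < t1 -> t1 < t2 -> Lam k t1 < Lam k t2.
Proof.
  intros Hk H1 H2. rewrite !Lam_exp by (auto; lra). apply exp_increasing. apply Lf_strict; auto.
Qed.

Lemma Lam_pos k t : (2 <= k)%nat -> 0 < t -> 0 < Lam k t.
Proof. intros. rewrite Lam_exp by auto. apply exp_pos. Qed.

Definition Lcr (k : nat) : R := (INR k) ^ k / (INR k - 1) ^ (S k).

Lemma Lam_lower k s : (2 <= k)%nat -> 0 < s -> Lcr k / ch ((INR k - 1) * s) ^ (S k) <= Lam k s.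
Proof.
  intros Hk Hs. generalize (K_ge2 k Hk); intro HK. set (K := INR k) in *.
  set (c := ch ((K - 1) * s)).
  assert (Hc : 1 <= c) by apply ch_ge1.
  assert (A1 : s <= sh s) by (apply sh_ge_id; lra).
  assert (A2 : K * s <= sh (K * s)) by (apply sh_ge_id; nra).
  assert (A3 : sh ((K-1) * s) <= (K - 1) * s * c) by (apply sh_le; nra).
  assert (A4 : 0 < sh ((K-1) * s)) by (apply sh_pos; nra).
  unfold Lam. fold K.
  apply Rle_trans with (s * (K * s) ^ k / ((K - 1) * s * c) ^ S k).
  - right. unfold Lcr. fold K. rewrite !Rpow_mult_distr. simpl. field.
    repeat split; try apply pow_nonzero; lra.
  - unfold Rdiv. apply Rmult_le_compat.
    + apply Rmult_le_pos; [lra|]. apply pow_le; nra.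
    + left. apply Rinv_0_lt_compat. apply pow_lt. nra.
    + apply Rmult_le_compat; try lra. apply pow_le; nra. apply pow_incr; nra.
    + apply Rinv_le_contravar. apply pow_lt; lra. apply pow_incr; lra.
Qed.

Lemma Lam_upper k s : (2 <= k)%nat -> 0 < s -> Lam k s <= Lcr k * ch s * ch (INR k * s) ^ k.
Proof.
  intros Hk Hs. generalize (K_ge2 k Hk); intro HK. set (K := INR k) in *.
  assert (A1 : sh s <= s * ch s) by (apply sh_le; lra).
  assert (A2 : sh (K * s) <= K * s * ch (K * s)) by (apply sh_le; nra).
  assert (A3 : (K - 1) * s <= sh ((K-1) * s)) by (apply sh_ge_id; nra).
  assert (A5 : 0 < sh s) by (apply sh_pos; lra).
  assert (A6 : 0 < sh (K * s)) by (apply sh_pos; nra).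
  generalize (ch_pos s) (ch_pos (K * s)); intros C1 C2.
  unfold Lam. fold K.
  apply Rle_trans with ((s * ch s) * (K * s * ch (K * s)) ^ k / ((K - 1) * s) ^ S k).
  - unfold Rdiv. apply Rmult_le_compat.
    + apply Rmult_le_pos; [lra|]. apply pow_le; nra.
    + left. apply Rinv_0_lt_compat. apply pow_lt. nra.
    + apply Rmult_le_compat; try lra. apply pow_le; nra. apply pow_incr; nra.
    + apply Rinv_le_contravar. apply pow_lt; nra. apply pow_incr; nra.
  - right. unfold Lcr. fold K. rewrite !Rpow_mult_distr. simpl. field.
    repeat split; try apply pow_nonzero; lra.
Qed.

Lemma Lam_big k t : (2 <= k)%nat -> 0 < t -> 2 * t < Lam k t.
Proof.
  intros Hk Ht. generalize (K_ge2 k Hk); intro HK. set (K := INR k) in *.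
  set (s1 := sh t). set (c1 := ch t). set (s := sh ((K-1)*t)). set (c := ch ((K-1)*t)).
  assert (Hs1 : 0 < s1) by (apply sh_pos; lra).
  assert (Hs : 0 < s) by (apply sh_pos; nra).
  assert (Hc : 1 < c) by (apply ch_gt1; nra).
  assert (Hcs : c * c - s * s = 1) by apply ch_sh2.
  assert (Hcs2 : s <= c) by nra.
  assert (HS : sh (K * t) = s * c1 + c * s1).
  { replace (K * t) with ((K-1)*t + t) by ring. apply sh_plus. }
  assert (Hce : c1 + s1 = exp t) by (unfold c1, s1, ch, sh; field).
  assert (Het : 1 < exp t) by (rewrite <- exp_0; apply exp_increasing; lra).
  assert (Hse : 2 * s < exp t ^ (k - 1)).
  { rewrite <- exp_nat. rewrite minus_INR by lia. simpl INR. fold K. unfold s, sh.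
    generalize (exp_pos (- ((K - 1) * t))). lra. }
  assert (HSge : s * exp t <= sh (K * t)).
  { rewrite HS, <- Hce. generalize (ch_pos t). fold c1. nra. }
  assert (Lb : s1 * (s * exp t) ^ k / s ^ S k <= Lam k t).
  { unfold Lam. fold K. fold s1 s. unfold Rdiv. apply Rmult_le_compat_r.
    left; apply Rinv_0_lt_compat, pow_lt; lra.
    apply Rmult_le_compat_l; [lra|]. apply pow_incr. split; [nra|lra]. }
  assert (Eq : s1 * (s * exp t) ^ k / s ^ S k = s1 * exp t * (exp t ^ (k - 1) / s)).
  { assert (Hkm : k = S (k - 1)) by lia. remember (k - 1)%nat as m. rewrite Hkm.
    rewrite Rpow_mult_distr. simpl. field.
    repeat split; try apply pow_nonzero; lra. }
  rewrite Eq in Lb.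
  assert (2 < exp t ^ (k - 1) / s).
  { apply (Rmult_lt_reg_r s); auto. unfold Rdiv. rewrite Rmult_assoc, Rinv_l; lra. }
  assert (t <= s1) by (apply sh_ge_id; lra).
  assert (s1 < s1 * exp t) by nra.
  assert (s1 * exp t * 2 < s1 * exp t * (exp t ^ (k - 1) / s)) by (apply Rmult_lt_compat_l; nra).
  lra.
Qed.

Lemma cont_near0 (f : R -> R) (t eps : R) : continuity_pt f 0 -> 0 < t -> 0 < eps ->
  exists s, 0 < s < t /\ Rabs (f s - f 0) < eps.
Proof.
  intros Hc Ht He. destruct (Hc eps He) as [d [Hd Hf]].
  exists (Rmin (d / 2) (t / 2)). assert (0 < Rmin (d/2) (t/2)) by (apply Rmin_glb_lt; lra).
  split. split; auto. assert (Rmin (d/2) (t/2) <= t/2) by apply Rmin_r. lra.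
  apply (Hf (Rmin (d/2) (t/2))). split. split. exact I. lra.
  simpl. unfold R_dist. rewrite Rminus_0_r, Rabs_pos_eq by lra.
  assert (Rmin (d/2) (t/2) <= d/2) by apply Rmin_l. lra.
Qed.

Lemma Lcr_pos k : (2 <= k)%nat -> 0 < Lcr k.
Proof.
  intro Hk. generalize (K_ge2 k Hk); intro. unfold Lcr. apply Rdiv_lt_0_compat; apply pow_lt; lra.
Qed.

Lemma ch_0 : ch 0 = 1.
Proof. unfold ch. rewrite Ropp_0, exp_0. lra. Qed.

Lemma Lam_gt_cr k t : (2 <= k)%nat -> 0 < t -> Lcr k < Lam k t.
Proof.
  intros Hk Ht.
  assert (Hmid : Lcr k <= Lam k (t / 2)).
  { destruct (Rle_or_lt (Lcr k) (Lam k (t/2))) as [|Hlt]; auto. exfalso.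
    set (f := fun s => Lcr k / ch ((INR k - 1) * s) ^ (S k)).
    assert (Hc : continuity_pt f 0).
    { apply derivable_continuous_pt, ex_derive_Reals_0. unfold f, ch. auto_derive.
      rewrite Rmult_0_r, Ropp_0, exp_0. apply Rmult_integral_contrapositive. split. lra. apply pow_nonzero. lra. }
    assert (f0 : f 0 = Lcr k) by (unfold f; rewrite Rmult_0_r, ch_0, pow1; field).
    destruct (cont_near0 f (t/2) (Lcr k - Lam k (t/2)) Hc) as [s [Hs1 Hs2]]; try lra.
    rewrite f0 in Hs2. apply Rabs_def2 in Hs2.
    assert (f s <= Lam k s) by (apply Lam_lower; auto; lra).
    assert (Lam k s < Lam k (t/2)) by (apply Lam_strict; auto; lra).
    lra. }
  assert (Lam k (t/2) < Lam k t) by (apply Lam_strict; auto; lra). lra.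
Qed.

Lemma Lam_cont k a : (2 <= k)%nat -> 0 < a -> continuity_pt (Lam k) a.
Proof.
  intros Hk Ha. generalize (K_ge2 k Hk); intro.
  assert (P : 0 < sh ((INR k - 1) * a)) by (apply sh_pos; nra).
  apply derivable_continuous_pt, ex_derive_Reals_0. unfold Lam, sh. auto_derive.
  unfold sh in P. apply Rmult_integral_contrapositive. split. lra. apply pow_nonzero. lra.
Qed.

Lemma Lam_surj k L : (2 <= k)%nat -> Lcr k < L -> exists t, 0 < t /\ Lam k t = L.
Proof.
  intros Hk HL. generalize (Lcr_pos k Hk); intro Hc0.
  set (f := fun s => Lcr k * ch s * ch (INR k * s) ^ k).
  assert (Hc : continuity_pt f 0).
  { apply derivable_continuous_pt, ex_derive_Reals_0. unfold f, ch. auto_derive. auto. }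
  assert (f0 : f 0 = Lcr k) by (unfold f; rewrite Rmult_0_r, ch_0, pow1; ring).
  destruct (cont_near0 f L (L - Lcr k) Hc) as [s [Hs1 Hs2]]; try lra.
  rewrite f0 in Hs2. apply Rabs_def2 in Hs2.
  assert (Lam k s <= f s) by (apply Lam_upper; auto; lra).
  assert (2 * L < Lam k L) by (apply Lam_big; auto; lra).
  destruct (Ranalysis5.IVT_interv (fun t => Lam k t - L) s L) as [t [Ht1 Ht2]].
  - intros a Ha. apply continuity_pt_minus. apply Lam_cont; auto; lra. apply continuity_pt_const. intros x y; reflexivity.
  - lra.
  - lra.
  - lra.
  - exists t. split. lra. lra.
Qed.

Definition Xf (k : nat) (t : R) := exp (INR k * t) * sh t / sh ((INR k - 1) * t).
Definition Yf (k : nat) (t : R) := exp (- (INR k * t)) * sh t / sh ((INR k - 1) * t).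

Lemma pow_div x y n : (x / y) ^ n = x ^ n / y ^ n.
Proof. unfold Rdiv. rewrite Rpow_mult_distr, pow_inv. reflexivity. Qed.

Lemma XY_core m t : (1 <= m)%nat -> 0 < t ->
  let a := exp t in let P := a ^ m in
  Xf (S m) t = a * P * ((a - / a) / 2) / ((P - / P) / 2) /\
  Yf (S m) t = / (a * P) * ((a - / a) / 2) / ((P - / P) / 2) /\
  sh (INR (S m) * t) = (a * P - / (a * P)) / 2 /\
  Lam (S m) t = ((a - / a) / 2) * ((a * P - / (a * P)) / 2) ^ (S m) / ((P - / P) / 2) ^ (S (S m)).
Proof.
  intros Hm Ht a P.
  assert (E1 : exp (INR (S m) * t) = a * P).
  { rewrite exp_nat. unfold P, a. simpl. ring. }
  assert (E2 : exp ((INR (S m) - 1) * t) = P).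
  { rewrite S_INR. replace (INR m + 1 - 1) with (INR m) by ring. rewrite exp_nat. reflexivity. }
  unfold Xf, Yf, Lam, sh. rewrite !exp_neg, E1, E2. fold a. repeat split; reflexivity.
Qed.

Lemma XY_props k t : (2 <= k)%nat -> 0 < t ->
  0 < Yf k t /\ Yf k t < Xf k t /\
  Xf k t = Lam k t / (1 + Yf k t) ^ k /\ Yf k t = Lam k t / (1 + Xf k t) ^ k.
Proof.
  intros Hk Ht. destruct k as [|m]; [lia|]. assert (Hm : (1 <= m)%nat) by lia.
  destruct (XY_core m t Hm Ht) as [HX [HY [HS HL]]].
  set (a := exp t) in *. set (P := a ^ m) in *.
  assert (Ha : 1 < a) by (unfold a; rewrite <- exp_0; apply exp_increasing; lra).
  assert (HP : 1 < P) by (unfold P; apply Rlt_pow_R1; auto; lia).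
  assert (Ia : / a < 1) by (rewrite <- Rinv_1; apply Rinv_lt_contravar; lra).
  assert (IP : / P < 1) by (rewrite <- Rinv_1; apply Rinv_lt_contravar; lra).
  assert (Ia0 : 0 < / a) by (apply Rinv_0_lt_compat; lra).
  assert (IP0 : 0 < / P) by (apply Rinv_0_lt_compat; lra).
  assert (Hs1 : 0 < (a - / a) / 2) by lra.
  assert (Hs : 0 < (P - / P) / 2) by lra.
  assert (HaP : 1 < a * P) by nra.
  assert (HaP0 : 0 < / (a * P)) by (apply Rinv_0_lt_compat; lra).
  assert (Q : 0 < (a - / a) / 2 / ((P - / P) / 2)) by (apply Rdiv_lt_0_compat; lra).
  assert (HY1 : 1 + Yf (S m) t = ((a * P - / (a * P)) / 2) / (a * ((P - / P) / 2))).
  { rewrite HY. field. repeat split; nra. }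
  assert (HX1 : 1 + Xf (S m) t = a * ((a * P - / (a * P)) / 2) / ((P - / P) / 2)).
  { rewrite HX. field. repeat split; nra. }
  assert (HaN : a ^ S m = a * P) by reflexivity.
  assert (/ (a * P) < 1) by (rewrite <- Rinv_1; apply Rinv_lt_contravar; lra).
  set (w := (a - / a) / 2) in *. set (v := (P - / P) / 2) in *. set (Sg := (a * P - / (a * P)) / 2) in *.
  assert (HS0 : 0 < Sg) by (unfold Sg; lra).
  assert (Hw : 0 < w) by (unfold w; lra).
  assert (HL' : Lam (S m) t = w * Sg ^ S m / (v * v ^ S m)) by (rewrite HL; reflexivity).
  assert (Sn : 0 < Sg ^ S m) by (apply pow_lt; lra).
  assert (Vn : 0 < v ^ S m) by (apply pow_lt; lra).
  assert (An : 0 < a ^ S m) by (apply pow_lt; lra).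
  split; [|split; [|split]].
  - rewrite HY. apply Rdiv_lt_0_compat; [apply Rmult_lt_0_compat|]; lra.
  - rewrite HX, HY. apply Rmult_lt_compat_r. apply Rinv_0_lt_compat; lra.
    apply Rmult_lt_compat_r. lra.
    assert (/ (a * P) < 1) by (rewrite <- Rinv_1; apply Rinv_lt_contravar; lra). lra.
  - rewrite HY1, HL', HX, pow_div, Rpow_mult_distr, HaN.
    clearbody w v Sg P a. set (SS := Sg ^ S m) in *. set (VV := v ^ S m) in *. clearbody SS VV.
    field. repeat split; nra.
  - rewrite HX1, HL', HY, pow_div, Rpow_mult_distr, HaN.
    clearbody w v Sg P a. set (SS := Sg ^ S m) in *. set (VV := v ^ S m) in *. clearbody SS VV.
    field. repeat split; nra.
Qed.

Lemma XY_inv k L x y : (2 <= k)%nat -> 0 < y -> y < x ->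
  x = L / (1 + y) ^ k -> y = L / (1 + x) ^ k ->
  exists t, 0 < t /\ x = Xf k t /\ y = Yf k t /\ L = Lam k t.
Proof.
  intros Hk Hy Hyx Hx Hy2.
  assert (Py : 0 < (1 + y) ^ k) by (apply pow_lt; lra).
  assert (Px : 0 < (1 + x) ^ k) by (apply pow_lt; lra).
  assert (Lx : L = x * (1 + y) ^ k) by (rewrite Hx; field; lra).
  assert (Ly : L = y * (1 + x) ^ k) by (rewrite Hy2; field; lra).
  set (r := (1 + x) / (1 + y)).
  assert (Hr : 1 < r) by (unfold r; apply (Rmult_lt_reg_r (1 + y)); [lra|]; field_simplify; lra).
  assert (Hr1 : 1 + x = r * (1 + y)) by (unfold r; field; lra).
  assert (Hxr : x = y * r ^ k).
  { apply (Rmult_eq_reg_r ((1 + y) ^ k)); [|lra].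
    rewrite <- Lx, Ly, Hr1, Rpow_mult_distr. ring. }
  set (t := ln r / 2).
  assert (Ht : 0 < t) by (unfold t; assert (0 < ln r) by (rewrite <- ln_1; apply ln_increasing; lra); lra).
  destruct k as [|m]; [lia|]. assert (Hm : (1 <= m)%nat) by lia.
  destruct (XY_core m t Hm Ht) as [HX [HY [HS HL]]].
  set (a := exp t) in *. set (P := a ^ m) in *.
  assert (Haa : a * a = r).
  { unfold a. rewrite <- exp_plus. replace (t + t) with (ln r) by (unfold t; field). apply exp_ln; lra. }
  assert (Ha : 1 < a) by (unfold a; rewrite <- exp_0; apply exp_increasing; lra).
  assert (HP : 1 < P) by (unfold P; apply Rlt_pow_R1; auto; lia).
  assert (Hrk : r ^ S m = a * a * (P * P)).
  { rewrite <- Haa, Rpow_mult_distr. simpl. fold P. ring. }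
  assert (Heq : y * (a * a * (P * P) - a * a) = a * a - 1).
  { rewrite Hrk in Hxr. rewrite Haa. rewrite Haa in Hrk.
    assert (1 + y * (r * (P * P)) = r * (1 + y)) by (rewrite <- Hr1, Hxr, <- Haa; ring).
    rewrite <- Haa in H |- *. nra. }
  assert (Hd : a * a * (P * P) - a * a > 0) by nra.
  assert (Hy' : y = (a * a - 1) / (a * a * (P * P) - a * a)) by (rewrite <- Heq; field; lra).
  assert (EY : y = Yf (S m) t).
  { rewrite HY, Hy'. clearbody P a. field. repeat split; nra. }
  exists t. split; auto. split; [|split; auto].
  - rewrite Hxr, Hrk, HX, EY, HY. clearbody P a. field. repeat split; nra.
  - destruct (XY_props (S m) t Hk Ht) as [_ [_ [HX2 _]]].
    rewrite Lx. rewrite EY.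
    assert (x = Xf (S m) t) by (rewrite Hxr, Hrk, HX, EY, HY; clearbody P a; field; repeat split; nra).
    rewrite H, HX2. field. apply pow_nonzero. destruct (XY_props (S m) t Hk Ht) as [Hp _]. lra.
Qed.

Definition sys (k : nat) (L x y : R) := 0 < x /\ 0 < y /\ x = L / (1 + y) ^ k /\ y = L / (1 + x) ^ k.

Lemma sym_exists k L : 0 < L -> exists x, 0 < x /\ x = L / (1 + x) ^ k.
Proof.
  intro HL.
  destruct (IVT (fun x => x * (1 + x) ^ k - L) 0 (L + 1)) as [x [Hx1 Hx2]].
  - intro a. apply derivable_continuous_pt, ex_derive_Reals_0. auto_derive. auto.
  - lra.
  - simpl. lra.
  - simpl. assert (1 <= (1 + (L + 1)) ^ k) by (apply pow_R1_Rle; lra). assert ((L + 1) * 1 <= (L + 1) * (1 + (L + 1)) ^ k) by (apply Rmult_le_compat_l; lra). lra.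
  - exists x. assert (0 < (1 + x) ^ k) by (apply pow_lt; lra).
    assert (x <> 0). { intro; subst. simpl in Hx2. lra. }
    split. lra. apply (Rmult_eq_reg_r ((1 + x) ^ k)); [|lra]. field_simplify; lra.
Qed.

Lemma sym_unique k L x x' : 0 < x -> 0 < x' -> x = L / (1 + x) ^ k -> x' = L / (1 + x') ^ k -> x = x'.
Proof.
  intros H1 H2 E1 E2.
  assert (P1 : 0 < (1 + x) ^ k) by (apply pow_lt; lra).
  assert (P2 : 0 < (1 + x') ^ k) by (apply pow_lt; lra).
  assert (F1 : x * (1 + x) ^ k = L) by (rewrite E1 at 1; field; lra).
  assert (F2 : x' * (1 + x') ^ k = L) by (rewrite E2 at 1; field; lra).
  destruct (Rtotal_order x x') as [Hl|[He|Hl]]; auto; exfalso.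
  - assert ((1 + x) ^ k <= (1 + x') ^ k) by (apply pow_incr; lra).
    nra.
  - assert ((1 + x') ^ k <= (1 + x) ^ k) by (apply pow_incr; lra). nra.
Qed.

Lemma sys_swap k L x y : sys k L x y -> sys k L y x.
Proof. intros [? [? [? ?]]]. repeat split; auto. Qed.

Lemma Lam_inj k t1 t2 : (2 <= k)%nat -> 0 < t1 -> 0 < t2 -> Lam k t1 = Lam k t2 -> t1 = t2.
Proof.
  intros Hk H1 H2 E. destruct (Rtotal_order t1 t2) as [Hl|[He|Hl]]; auto; exfalso.
  - generalize (Lam_strict k t1 t2 Hk H1 Hl). lra.
  - generalize (Lam_strict k t2 t1 Hk H2 Hl). lra.
Qed.

Lemma sys_XY k t : (2 <= k)%nat -> 0 < t ->
  sys k (Lam k t) (Xf k t) (Yf k t) /\ sys k (Lam k t) (Yf k t) (Xf k t).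
Proof.
  intros Hk Ht. destruct (XY_props k t Hk Ht) as [H1 [H2 [H3 H4]]].
  split; repeat split; auto; lra.
Qed.

Lemma classify_le k L x y : (2 <= k)%nat -> L <= Lcr k -> sys k L x y -> x = y.
Proof.
  intros Hk HL Hs. destruct (Rtotal_order x y) as [Hl|[He|Hl]]; auto; exfalso.
  - destruct (sys_swap _ _ _ _ Hs) as [? [? [? ?]]].
    destruct (XY_inv k L y x Hk) as [t [Ht [_ [_ HLt]]]]; auto; try lra.
    generalize (Lam_gt_cr k t Hk Ht). lra.
  - destruct Hs as [? [? [? ?]]].
    destruct (XY_inv k L x y Hk) as [t [Ht [_ [_ HLt]]]]; auto; try lra.
    generalize (Lam_gt_cr k t Hk Ht). lra.
Qed.

Lemma classify_gt k L t x y : (2 <= k)%nat -> 0 < t -> Lam k t = L -> sys k L x y ->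
  x = y \/ (x = Xf k t /\ y = Yf k t) \/ (x = Yf k t /\ y = Xf k t).
Proof.
  intros Hk Ht HLt Hs. destruct (Rtotal_order x y) as [Hl|[He|Hl]]; auto.
  - destruct (sys_swap _ _ _ _ Hs) as [? [? [? ?]]].
    destruct (XY_inv k L y x Hk) as [t' [Ht' [E1 [E2 HL']]]]; auto; try lra.
    assert (t' = t) by (apply (Lam_inj k); auto; lra). subst t'. right; right; auto.
  - destruct Hs as [? [? [? ?]]].
    destruct (XY_inv k L x y Hk) as [t' [Ht' [E1 [E2 HL']]]]; auto; try lra.
    assert (t' = t) by (apply (Lam_inj k); auto; lra). subst t'. right; left; auto.
Qed.

Lemma series_term_le (a : nat -> R) l m : (forall n, 0 <= a n) -> is_series a l -> a m <= l.
Proof.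
  intros Hp Hs.
  assert (Hl : is_lim_seq (sum_n a) l) by exact Hs.
  assert (R : Rbar_le (a m) l).
  { apply (is_lim_seq_le_loc (fun _ => a m) (sum_n a)); [| apply is_lim_seq_const | exact Hl].
    exists m. intros n Hn. rewrite sum_n_Reals.
    induction n.
    - assert (m = 0%nat) by lia. subst. simpl. lra.
    - destruct (Nat.eq_dec m (S n)) as [->|Hne].
      + simpl. assert (0 <= sum_f_R0 a n) by (apply cond_pos_sum; auto). lra.
      + simpl. assert (a m <= sum_f_R0 a n) by (apply IHn; lia). generalize (Hp (S n)). lra. }
  exact R.
Qed.

Lemma Zn0 n : Z.of_nat (S n) <> 0%Z.
Proof. lia. Qed.
Lemma Zn0' n : (- Z.of_nat (S n))%Z <> 0%Z.
Proof. lia. Qed.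

Lemma Z0_term_nonneg (f : Z -> R) n : (forall i, i <> 0%Z -> 0 < f i) -> 0 < Z0_term f n.
Proof. intro H. unfold Z0_term. generalize (H _ (Zn0 n)) (H _ (Zn0' n)). lra. Qed.

Lemma Z0_term_ext (f g : Z -> R) : eqZ0 f g -> forall n, Z0_term f n = Z0_term g n.
Proof. intros H n. unfold Z0_term. rewrite (H _ (Zn0 n)), (H _ (Zn0' n)). reflexivity. Qed.

Lemma sum_unique f g a b : eqZ0 f g -> has_sum_Z0 f a -> has_sum_Z0 g b -> a = b.
Proof.
  intros H Ha Hb. unfold has_sum_Z0 in *.
  apply is_series_unique in Ha. apply is_series_unique in Hb.
  rewrite <- Ha, <- Hb. apply Series_ext. apply Z0_term_ext; auto.
Qed.

Lemma has_sum_pos f s : (forall i, i <> 0%Z -> 0 < f i) -> has_sum_Z0 f s -> 0 < s.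
Proof.
  intros H Hs. assert (Z0_term f 0 <= s).
  { apply series_term_le; auto. intro n; left; apply Z0_term_nonneg; auto. }
  generalize (Z0_term_nonneg f 0 H). lra.
Qed.

Lemma has_sum_div f s D : 0 < D -> has_sum_Z0 f s -> has_sum_Z0 (fun i => f i / D) (s / D).
Proof.
  intros HD Hs. unfold has_sum_Z0 in *.
  apply (is_series_ext (fun n => scal (/ D) (Z0_term f n))).
  { intro n. unfold Z0_term, scal; simpl; unfold mult; simpl. field. lra. }
  replace (s / D) with (scal (/ D) s) by (unfold scal; simpl; unfold mult; simpl; field; lra).
  exact (@is_series_scal R_AbsRing R_NormedModule (/ D) _ _ Hs).
Qed.

Lemma term_le_sum f L i : (forall i, i <> 0%Z -> 0 < f i) -> has_sum_Z0 f L -> i <> 0%Z -> f i <= L.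
Proof.
  intros Hp Hs Hi.
  assert (Hn : exists n, i = Z.of_nat (S n) \/ i = (- Z.of_nat (S n))%Z).
  { exists (Z.to_nat (Z.abs i) - 1)%nat. lia. }
  destruct Hn as [n Hn].
  assert (Z0_term f n <= L).
  { apply series_term_le; auto. intro m; left; apply Z0_term_nonneg; auto. }
  unfold Z0_term in H. generalize (Hp _ (Zn0 n)) (Hp _ (Zn0' n)).
  destruct Hn as [-> | ->]; lra.
Qed.

Lemma rpow_bound z B k : (1 <= k)%nat -> 0 < z -> z <= B ->
  Rpower z (INR (S k) / INR k) <= z * Rpower B (/ INR k).
Proof.
  intros Hk Hz HB. assert (HK : 1 <= INR k) by (apply le_INR in Hk; simpl in Hk; lra).
  replace (INR (S k) / INR k) with (1 + / INR k) by (rewrite S_INR; field; lra).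
  rewrite Rpower_plus, Rpower_1 by auto.
  apply Rmult_le_compat_l; [lra|]. apply Rle_Rpower_l. left; apply Rinv_0_lt_compat; lra. lra.
Qed.

Lemma scal_R (c x : R) : scal c x = c * x.
Proof. reflexivity. Qed.
Lemma norm_R (x : R) : norm x = Rabs x.
Proof. reflexivity. Qed.

Lemma rpow_summable lam L D k : (1 <= k)%nat -> (forall i, i <> 0%Z -> 0 < lam i) ->
  has_sum_Z0 lam L -> 0 < D ->
  summable_Z0 (fun i => Rpower (lam i / D) (INR (S k) / INR k)).
Proof.
  intros Hk Hp Hs HD.
  set (c := Rpower (L / D) (/ INR k)).
  assert (Hz := has_sum_div lam L D HD Hs).
  assert (Hb : is_series (fun n => scal c (Z0_term (fun i => lam i / D) n)) (scal c (L / D))).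
  { exact (@is_series_scal R_AbsRing R_NormedModule c _ _ Hz). }
  unfold summable_Z0.
  apply (@ex_series_le R_AbsRing R_CompleteNormedModule _ (fun n => scal c (Z0_term (fun i => lam i / D) n))).
  2: { eexists; exact Hb. }
  intro n. rewrite scal_R, norm_R. unfold Z0_term.
  assert (B1 := term_le_sum lam L _ Hp Hs (Zn0 n)).
  assert (B2 := term_le_sum lam L _ Hp Hs (Zn0' n)).
  assert (P1 := Hp _ (Zn0 n)). assert (P2 := Hp _ (Zn0' n)).
  assert (Q1 : 0 < lam (Z.of_nat (S n)) / D) by (apply Rdiv_lt_0_compat; lra).
  assert (Q2 : 0 < lam (- Z.of_nat (S n))%Z / D) by (apply Rdiv_lt_0_compat; lra).
  assert (R1 : lam (Z.of_nat (S n)) / D <= L / D) by (apply Rmult_le_compat_r; [left; apply Rinv_0_lt_compat|]; lra).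
  assert (R2 : lam (- Z.of_nat (S n))%Z / D <= L / D) by (apply Rmult_le_compat_r; [left; apply Rinv_0_lt_compat|]; lra).
  generalize (rpow_bound _ _ k Hk Q1 R1) (rpow_bound _ _ k Hk Q2 R2). fold c. intros T1 T2.
  rewrite Rabs_pos_eq.
  - rewrite Rmult_plus_distr_l, (Rmult_comm c), (Rmult_comm c). lra.
  - generalize (exp_pos (INR (S k) / INR k * ln (lam (Z.of_nat (S n)) / D)))
       (exp_pos (INR (S k) / INR k * ln (lam (- Z.of_nat (S n))%Z / D))). unfold Rpower. lra.
Qed.

Definition mk (k : nat) (lam : Z -> R) (y : R) : Z -> R := fun i => lam i / (1 + y) ^ k.

Lemma has_sum_mk k lam L x y : has_sum_Z0 lam L -> sys k L x y -> has_sum_Z0 (mk k lam y) x.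
Proof.
  intros Hs [Hx [Hy [Ex Ey]]]. rewrite Ex. unfold mk.
  apply has_sum_div; auto. apply pow_lt; lra.
Qed.

Lemma bl_make k lam L x y : (2 <= k)%nat -> (forall i, i <> 0%Z -> 0 < lam i) ->
  has_sum_Z0 lam L -> sys k L x y -> periodic_bl k lam (mk k lam y) (mk k lam x).
Proof.
  intros Hk Hp Hs HS. pose proof HS as [Hx [Hy [Ex Ey]]].
  assert (Dy : 0 < (1 + y) ^ k) by (apply pow_lt; lra).
  assert (Dx : 0 < (1 + x) ^ k) by (apply pow_lt; lra).
  split.
  - intros i Hi. unfold mk. split; apply Rdiv_lt_0_compat; auto.
  - exists x, y. split; [|split; [|split; [|split; [|split]]]].
    + eapply has_sum_mk; eauto.
    + eapply has_sum_mk; eauto. apply sys_swap; eauto.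
    + intros; reflexivity.
    + intros; reflexivity.
    + unfold mk. apply (rpow_summable lam L); auto. lia.
    + unfold mk. apply (rpow_summable lam L); auto. lia.
Qed.

Lemma bl_sums k lam L z zt : (forall i, i <> 0%Z -> 0 < lam i) -> has_sum_Z0 lam L ->
  periodic_bl k lam z zt -> exists s st, has_sum_Z0 z s /\ has_sum_Z0 zt st /\ sys k L s st /\
  eqZ0 z (mk k lam st) /\ eqZ0 zt (mk k lam s).
Proof.
  intros Hp Hs [Hpos [s [st [Hz [Hzt [Ez [Ezt _]]]]]]].
  assert (Ps : 0 < s) by (apply (has_sum_pos z); auto; intros; apply Hpos; auto).
  assert (Pst : 0 < st) by (apply (has_sum_pos zt); auto; intros; apply Hpos; auto).
  assert (D1 : 0 < (1 + st) ^ k) by (apply pow_lt; lra).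
  assert (D2 : 0 < (1 + s) ^ k) by (apply pow_lt; lra).
  exists s, st. split; auto. split; auto.
  assert (E1 : eqZ0 z (mk k lam st)) by (intros i Hi; apply Ez; auto).
  assert (E2 : eqZ0 zt (mk k lam s)) by (intros i Hi; apply Ezt; auto).
  split; auto.
  repeat split; auto.
  - apply (sum_unique z (mk k lam st)); auto. unfold mk. apply has_sum_div; auto.
  - apply (sum_unique zt (mk k lam s)); auto. unfold mk. apply has_sum_div; auto.
Qed.

Lemma mk_same k lam L x1 y1 x2 y2 : has_sum_Z0 lam L -> sys k L x1 y1 -> sys k L x2 y2 ->
  same_bl (mk k lam y1) (mk k lam x1) (mk k lam y2) (mk k lam x2) -> x1 = x2 /\ y1 = y2.
Proof.
  intros Hs H1 H2 [E1 E2]. split.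
  - apply (sum_unique _ _ _ _ E1); eapply has_sum_mk; eauto.
  - apply (sum_unique _ _ _ _ E2); eapply has_sum_mk; eauto; apply sys_swap; eauto.
Qed.

Lemma mk_transl k lam L x y : has_sum_Z0 lam L -> sys k L x y ->
  transl_inv (mk k lam y) (mk k lam x) -> x = y.
Proof.
  intros Hs H E. apply (sum_unique _ _ _ _ E); eapply has_sum_mk; eauto. apply sys_swap; eauto.
Qed.

Lemma div_summable k lam z zt : periodic_bl k lam z zt -> summable_Z0 lam.
Proof.
  intros [Hpos [s [st [Hz [Hzt [Ez [Ezt _]]]]]]].
  assert (Pst : 0 < st) by (apply (has_sum_pos zt); auto; intros; apply Hpos; auto).
  set (D := (1 + st) ^ k).
  assert (D1 : 0 < D) by (apply pow_lt; lra).
  assert (H := has_sum_div z s (/ D) (Rinv_0_lt_compat _ D1) Hz).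
  exists (s / / D). unfold has_sum_Z0 in H.
  assert (E : eqZ0 (fun i => z i / / D) lam).
  { intros i Hi. simpl. rewrite (Ez i Hi). fold D. field. lra. }
  apply (is_series_ext _ _ _ (Z0_term_ext _ _ E) H).
Qed.

Theorem mainTheorem2 (k : nat) (lam : Z -> R) :
  (2 <= k)%nat ->
  (forall j, j <> 0%Z -> 0 < lam j) ->
  (* (1) convergent case *)
  (forall Lam : R, has_sum_Z0 lam Lam ->
     (0 < Lam <= Lambda_cr k ->
        exists z0 zt0 : Z -> R,
          periodic_bl k lam z0 zt0 /\ transl_inv z0 zt0 /\
          (forall z zt, periodic_bl k lam z zt -> same_bl z zt z0 zt0)) /\
     (Lambda_cr k < Lam ->
        exists z0 zt0 z1 zt1 z2 zt2 : Z -> R,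
          periodic_bl k lam z0 zt0 /\
          periodic_bl k lam z1 zt1 /\
          periodic_bl k lam z2 zt2 /\
          ~ same_bl z0 zt0 z1 zt1 /\ ~ same_bl z0 zt0 z2 zt2 /\
          ~ same_bl z1 zt1 z2 zt2 /\
          transl_inv z0 zt0 /\ ~ transl_inv z1 zt1 /\ ~ transl_inv z2 zt2 /\
          (forall z zt, periodic_bl k lam z zt ->
             same_bl z zt z0 zt0 \/ same_bl z zt z1 zt1 \/ same_bl z zt z2 zt2))) /\
  (* (2) divergent case *)
  (~ summable_Z0 lam -> forall z zt : Z -> R, ~ periodic_bl k lam z zt).
Proof.
  intros Hk Hp. split.
  - intros L HsL. assert (HL0 : 0 < L) by (apply (has_sum_pos lam); auto).
    destruct (sym_exists k L HL0) as [xs [Hxs Exs]].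
    assert (Hsym : sys k L xs xs) by (repeat split; auto).
    assert (Cls : forall z zt, periodic_bl k lam z zt -> forall s st, sys k L s st ->
      eqZ0 z (mk k lam st) -> eqZ0 zt (mk k lam s) -> s = xs -> st = xs ->
      same_bl z zt (mk k lam xs) (mk k lam xs)).
    { intros z zt _ s st _ E1 E2 -> ->. split; auto. }
    split.
    + intros [_ Hle]. exists (mk k lam xs), (mk k lam xs). split; [|split].
      * apply (bl_make k lam L); auto.
      * intros i _; reflexivity.
      * intros z zt Hbl. destruct (bl_sums k lam L z zt Hp HsL Hbl) as [s [st [_ [_ [Hss [E1 E2]]]]]].
        assert (Est : s = st) by (apply (classify_le k L); auto).
        subst st. destruct Hss as [Ps [_ [Es _]]].
        assert (s = xs) by (apply (sym_unique k L); auto).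
        subst s. split; auto.
    + intros Hgt. destruct (Lam_surj k L Hk Hgt) as [t [Ht HLt]].
      destruct (sys_XY k t Hk Ht) as [S1 S2]. rewrite HLt in S1, S2.
      destruct (XY_props k t Hk Ht) as [HY0 [HYX _]].
      set (X := Xf k t) in *. set (Y := Yf k t) in *.
      exists (mk k lam xs), (mk k lam xs), (mk k lam Y), (mk k lam X), (mk k lam X), (mk k lam Y).
      split; [apply (bl_make k lam L); auto|].
      split; [apply (bl_make k lam L); auto|].
      split; [apply (bl_make k lam L); auto|].
      split. { intro E. destruct (mk_same k lam L _ _ _ _ HsL Hsym S1 E). lra. }
      split. { intro E. destruct (mk_same k lam L _ _ _ _ HsL Hsym S2 E). lra. }
      split. { intro E. destruct (mk_same k lam L _ _ _ _ HsL S1 S2 E). lra. }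
      split. { intros i _; reflexivity. }
      split. { intro E. generalize (mk_transl k lam L _ _ HsL S1 E). lra. }
      split. { intro E. generalize (mk_transl k lam L _ _ HsL S2 E). lra. }
      intros z zt Hbl. destruct (bl_sums k lam L z zt Hp HsL Hbl) as [s [st [_ [_ [Hss [E1 E2]]]]]].
      destruct (classify_gt k L t s st Hk Ht HLt Hss) as [Est|[[-> ->]|[-> ->]]].
      * left. subst st. destruct Hss as [Ps [_ [Es _]]].
        assert (s = xs) by (apply (sym_unique k L); auto).
        subst s. split; auto.
      * right; left. split; auto.
      * right; right. split; auto.
  - intros Hns z zt Hbl. apply Hns. eapply div_summable; eauto.
Qed.
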